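(* Let $m$ be an odd positive integer. If $K^*_{2m}$ admits a $\vec{C}_m$-factorization, then $K^*_{6m}$ admits a $\vec{C}_{3m}$-factorization.
   Context: $K^*_n$ denotes the complete symmetric digraph on $n$ vertices (both arcs $(u,v),(v,u)$ for all distinct $u,v$; no loops). A $\vec{C}_\ell$-factor of a digraph is a spanning subdigraph that is a disjoint union of directed cycles of length $\ell$; a $\vec{C}_\ell$-factorization is a partition of the arc set into $\vec{C}_\ell$-factors. *)

(* Defs.v *)
From mathcomp Require Import all_boot.
Set Implicit Arguments. Unset Strict Implicit. Unset Printing Implicit Defensive.

Definition Kstar_arcs (n : nat) : {set 'I_n * 'I_n} :=
  [set a : 'I_n * 'I_n | a.1 != a.2].

(* A directed cycle is given by its cyclic vertex sequence c = [v0;...;v_{l-1}]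
   (distinct vertices); its arcs are (v_i, v_{i+1 mod l}). *)
Definition dicycle_arcs (T : finType) (c : seq T) : {set T * T} :=
  [set (x, next c x) | x in c].

Definition is_dicycle (T : finType) (l : nat) (c : seq T) : bool :=
  uniq c && (size c == l).

Definition is_Cfactor (T : finType) (l : nat) (A F : {set T * T}) : Prop :=
  exists cs : seq (seq T),
    [/\ all (is_dicycle l) cs,
        (forall v : T, count (fun c => v \in c) cs = 1),
        F = \bigcup_(c <- cs) dicycle_arcs c
      & F \subset A].

Definition has_Cfactorization (T : finType) (l : nat) (A : {set T * T}) : Prop :=
  exists Fs : seq {set T * T},
    (forall F, F \in Fs -> is_Cfactor l A F) /\
    (forall a, a \in A -> count (fun F : {set T * T} => a \in F) Fs = 1).

(* Main.v *)
Require Import Defs.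
From mathcomp Require Import all_boot.
From mathcomp Require zify.
Set Implicit Arguments. Unset Strict Implicit. Unset Printing Implicit Defensive.

Module Aux.
Import zify.

Lemma count1_eq (T : eqType) (P : pred T) (s : seq T) a b :
  count P s = 1 -> a \in s -> b \in s -> P a -> P b -> a = b.
Proof.
move=> H1 ha hb pa pb.
have fa : a \in filter P s by rewrite mem_filter pa.
have fb : b \in filter P s by rewrite mem_filter pb.
rewrite -size_filter in H1.
case: (filter P s) H1 fa fb => [|z [|]] //= _.
by rewrite !inE => /eqP -> /eqP ->.
Qed.

Lemma mem_graph (T : finType) (g : T -> T) (a : T * T) :
  (a \in [set (x, g x) | x in T]) = (g a.1 == a.2).
Proof.
case: a => a1 a2 /=; apply/imsetP/eqP => [[x _ [-> ->]] //| <-]; by exists a1.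
Qed.

Lemma perm_factor (T : finType) (l : nat) (A : {set T * T}) (g : T -> T) :
  injective g -> (forall x, order g x = l) -> (forall x, (x, g x) \in A) ->
  is_Cfactor l A [set (x, g x) | x in T].
Proof.
move=> ginj gord gA.
exists [seq orbit g r | r <- enum (froots g)]; split.
- apply/allP => c /mapP [r _ ->]; by rewrite /is_dicycle orbit_uniq size_orbit gord eqxx.
- move=> v; rewrite count_map.
  have -> : count (preim (orbit g) (fun c => v \in c)) (enum (froots g))
          = count (pred1 (froot g v)) (enum (froots g)).
    apply: eq_in_count => r; rewrite mem_enum /= => rr.
    rewrite -fconnect_orbit; apply/idP/eqP => [H | ->].
      by rewrite -(eqP rr); apply/(rootP (fconnect_sym ginj)).
    by rewrite (fconnect_sym ginj); apply: connect_root.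
  have hr : froot g v \in froots g.
    by rewrite unfold_in (root_root (fconnect_sym ginj)).
  by rewrite count_uniq_mem ?enum_uniq // mem_enum hr.
- rewrite big_map big_enum /=.
  apply/setP => a; rewrite mem_graph; apply/idP/bigcupP.
  + move=> /eqP H; exists (froot g a.1); first by rewrite unfold_in (root_root (fconnect_sym ginj)).
    have ain : a.1 \in orbit g (froot g a.1).
      by rewrite -fconnect_orbit (fconnect_sym ginj); apply: connect_root.
    apply/imsetP; exists a.1 => //; by rewrite (nextE (cycle_orbit ginj _) ain) H -surjective_pairing.
  + move=> [r _] /imsetP [x xin ->] /=.
    by rewrite (nextE (cycle_orbit ginj _) xin).
- by apply/subsetP => a /imsetP [x _ ->].
Qed.

Lemma mem_map_In (A : Type) (B : eqType) (h : A -> B) (s : seq A) (y : B) :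
  y \in map h s -> exists2 x, List.In x s & y = h x.
Proof.
elim: s => //= a s IH; rewrite inE => /orP [/eqP -> | /IH [x xi ->]].
  by exists a; [left|].
by exists x; [right|].
Qed.

Lemma factorization_of_perms (T : finType) (l : nat) (gs : seq (T -> T)) :
  (forall g, List.In g gs -> [/\ injective g, forall x, order g x = l & forall x, g x != x]) ->
  (forall u v : T, u != v -> count (fun g => g u == v) gs = 1) ->
  has_Cfactorization l [set a : T * T | a.1 != a.2].
Proof.
move=> Hg Hc.
exists [seq [set (x, g x) | x in T] | g <- gs]; split.
- move=> F /mem_map_In [g gin ->]; have [gi go gx] := Hg g gin.
  by apply: perm_factor => // x; rewrite inE /= eq_sym gx.
- move=> a; rewrite inE count_map => ha.
  rewrite -(Hc _ _ ha); apply: eq_count => g /=; by rewrite mem_graph.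
Qed.


Lemma fconnect_iterP (T : finType) (f : T -> T) x y :
  fconnect f x y <-> exists n, y = iter n f x.
Proof.
split => [H | [n ->]]; last exact: fconnect_iter.
by exists (findex f x y); rewrite iter_findex.
Qed.

Arguments fconnect_iterP {T f x y}.

Lemma order_conj (T1 T2 : finType) (h : T1 -> T2) (hinv : T2 -> T1)
  (hK : cancel h hinv) (hinvK : cancel hinv h) (g : T1 -> T1) y :
  order (fun z => h (g (hinv z))) y = order g (hinv y).
Proof.
have it : forall n z, iter n (fun z => h (g (hinv z))) z = h (iter n g (hinv z)).
  by elim => [|n IH] z /=; rewrite ?hinvK // IH hK.
rewrite /order.
have -> : #|fconnect (fun z => h (g (hinv z))) y| = #|hinv @^-1: fconnect g (hinv y)|.
  apply: eq_card => z; rewrite [RHS]inE.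
  rewrite -[z \in fconnect _ _]/(fconnect _ y z) -[hinv z \in _]/(fconnect g (hinv y) (hinv z)).
  apply/idP/idP => [/fconnect_iterP [n ->] | /fconnect_iterP [n e]].
    by rewrite it hK; apply: fconnect_iter.
  by apply/fconnect_iterP; exists n; rewrite it -e hinvK.
apply: on_card_preimset; apply: onW_bij; exact: (Bijective hinvK hK).
Qed.

Lemma conj_factorization (T1 T2 : finType) (h : T1 -> T2) (hinv : T2 -> T1)
  (hK : cancel h hinv) (hinvK : cancel hinv h) (l : nat) (gs : seq (T1 -> T1)) :
  (forall g, List.In g gs -> [/\ injective g, forall x, order g x = l & forall x, g x != x]) ->
  (forall u v : T1, u != v -> count (fun g => g u == v) gs = 1) ->
  has_Cfactorization l [set a : T2 * T2 | a.1 != a.2].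
Proof.
move=> Hg Hc.
apply: (@factorization_of_perms _ _ [seq (fun z => h (g (hinv z))) | g <- gs]).
- move=> g' /List.in_map_iff [g [<- gin]]; have [gi go gx] := Hg g gin; split.
  + move=> a b /(can_inj hK) /gi; exact: (can_inj hinvK).
  + by move=> x; rewrite (order_conj hK hinvK g x) go.
  + move=> x; apply/negP => /eqP e; move: (gx (hinv x)); by rewrite -{2}e hK eqxx.
- move=> u v uv; rewrite count_map -(Hc (hinv u) (hinv v)).
    apply: eq_count => g /=; apply/eqP/eqP => [<-|->]; by rewrite ?hK ?hinvK.
  by apply: contra uv => /eqP e; rewrite -(hinvK u) e hinvK.
Qed.

Lemma ham (V : finType) (f : V -> V) (m : nat) (hord : forall x, order f x = m)
  (g : 'I_3 * V -> 'I_3 * V) (I : 'I_3 * V -> nat)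
  (hcol : forall s, (g s).2 = s.2 \/ (g s).2 = f s.2)
  (hI : forall s, I s < 3 * m)
  (hstep : forall s, I (g s) = if I s == (3 * m).-1 then 0 else (I s).+1) :
  injective g /\ forall s, order g s = 3 * m.
Proof.
set L := 3 * m.
have step : forall s, I (g s) = (I s).+1 %% L.
  move=> s; rewrite hstep; have := hI s; rewrite -/L => lt.
  case: eqP => e.
    by rewrite e prednK ?modnn //; lia.
  rewrite modn_small //; lia.
have itI : forall n s, I (iter n g s) = (I s + n) %% L.
  elim => [|n IH] s /=; first by rewrite addn0 modn_small.
  by rewrite step IH -addn1 modnDml -addnA addn1 addnS.
pose Comp (s : 'I_3 * V) := [set t : 'I_3 * V | fconnect f s.2 t.2].
have cardC : forall s, #|Comp s| = L.
  move=> s; have -> : Comp s = setX [set: 'I_3] [set y | fconnect f s.2 y].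
    by apply/setP => t; rewrite !inE.
  rewrite cardsX cardsT card_ord /L; congr (3 * _).
  rewrite -(hord s.2) /order; apply: eq_card => y; by rewrite inE.
have itC : forall n s, iter n g s \in Comp s.
  move=> n s; elim: n => [|n IH] /=; first by rewrite inE connect0.
  rewrite inE; move: IH; rewrite inE => IH.
  case: (hcol (iter n g s)) => ->; first exact: IH.
  by apply: connect_trans IH (fconnect1 _ _).
have distinct : forall s (i j : 'I_L), iter i g s = iter j g s -> i = j.
  move=> s i j e; apply/val_inj => /=.
  have := congr1 I e; rewrite !itI => /eqP; rewrite eqn_modDl => /eqP.
  by rewrite !modn_small.
pose S (s : 'I_3 * V) := [set iter (nat_of_ord i) g s | i : 'I_L].
have cardS : forall s, #|S s| = L.
  move=> s; rewrite card_imset ?card_ord //; exact: distinct.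
have SC : forall s, S s = Comp s.
  move=> s; apply/eqP; rewrite eqEcard cardS cardC leqnn andbT.
  by apply/subsetP => t /imsetP [i _ ->].
have back : forall s, iter L g s = s.
  move=> s; have := itC L s; rewrite -SC => /imsetP [i _ e].
  have Lgt0 : 0 < L by have := hI s; lia.
  have := congr1 I e; rewrite !itI modnDr => /eqP.
  rewrite -{1}[I s]addn0 eqn_modDl mod0n modn_small // => /eqP i0.
  by rewrite e -i0.
have ginj : injective g.
  apply: (can_inj (g := iter L.-1 g)) => s.
  have Lgt0 : 0 < L by have := hI s; lia.
  by rewrite -iterSr prednK // back.
split => // s.
apply/eqP; rewrite /order eqn_leq; apply/andP; split.
  rewrite -(cardC s); apply/subset_leq_card/subsetP => t.
  rewrite unfold_in => /fconnect_iterP [n ->]; exact: itC.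
rewrite -(cardS s); apply/subset_leq_card/subsetP => t /imsetP [i _ ->].
by rewrite unfold_in; apply: fconnect_iter.
Qed.

Lemma mem_bigcup_seq (T : finType) (I : Type) (s : seq I) (G : I -> {set T}) a :
  (a \in \bigcup_(c <- s) G c) = has (fun c => a \in G c) s.
Proof.
elim: s => [|c s IH]; first by rewrite big_nil inE.
by rewrite big_cons inE IH.
Qed.

Lemma index_next (T : eqType) (c : seq T) x : uniq c -> x \in c ->
  index (next c x) c = if index x c == (size c).-1 then 0 else (index x c).+1.
Proof.
case: c => [|y c'] // uc xc.
have : index x (y :: c') < (size c').+1 by rewrite -[(size c').+1]/(size (y :: c')) index_mem.
set i := index x (y :: c') => ilt.
have -> : next (y :: c') x = nth y c' i by rewrite next_nth xc.
have -> : (size (y :: c')).-1 = size c' by [].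
case: (ltnP i (size c')) => hi.
  have -> : nth y c' i = nth y (y :: c') i.+1 by [].
  rewrite index_uniq //.
  by rewrite ifN // neq_ltn hi.
have ie : i = size c' by apply/eqP; rewrite eqn_leq hi -ltnS ilt.
by rewrite nth_default ?ie // eqxx /= eqxx.
Qed.

Lemma extract (V : finType) (m : nat) (F : {set V * V}) :
  is_Cfactor m [set a : V * V | a.1 != a.2] F ->
  exists f : V -> V, exists pos : V -> nat,
    [/\ forall x y, ((x, y) \in F) = (f x == y), forall x, f x != x,
        forall x, order f x = m, forall x, pos x < m &
        forall x, pos (f x) = if pos x == m.-1 then 0 else (pos x).+1].
Proof.
move=> [cs [hall hcnt hF hsub]].
pose P x := fun c : seq V => x \in c.
have hasx : forall x, has (P x) cs by move=> x; rewrite has_count hcnt.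
pose cx x := nth [::] cs (find (P x) cs).
have cxin : forall x, cx x \in cs by move=> x; apply: mem_nth; rewrite -has_find.
have xcx : forall x, x \in cx x by move=> x; exact: (nth_find [::] (hasx x)).
have uniqc : forall x c, c \in cs -> x \in c -> c = cx x.
  by move=> x c cin xc; apply: (count1_eq (hcnt x)).
have dic : forall c, c \in cs -> uniq c /\ size c = m.
  by move=> c cin; move: (allP hall c cin) => /andP [-> /eqP ->].
pose f x := next (cx x) x.
exists f, (fun x => index x (cx x)); split.
- move=> x y; rewrite hF mem_bigcup_seq; apply/hasP/eqP => [[c cin] | <-].
    move=> /imsetP [z zc [-> ->]]; by rewrite /f -(uniqc z c cin zc).
  exists (cx x) => //; apply/imsetP; by exists x.
- move=> x; have : (x, f x) \in F.
    rewrite hF mem_bigcup_seq; apply/hasP; exists (cx x) => //; apply/imsetP; by exists x.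
  by move/(subsetP hsub); rewrite inE eq_sym.
- move=> x; have [u s] := dic _ (cxin x); rewrite -s.
  have fc : fcycle f (cx x).
    apply: (cycle_from_next u) => y yc; by rewrite /f /= -(uniqc y _ (cxin x) yc).
  exact: (order_cycle fc u (xcx x)).
- move=> x; have [u s] := dic _ (cxin x); by rewrite -s index_mem.
- move=> x; have [u s] := dic _ (cxin x).
  have e : cx (f x) = cx x by symmetry; apply: uniqc => //; rewrite mem_next.
  by rewrite e index_next // s.
Qed.

Definition cls (m k : nat) : nat := if k == 0 then 0 else if k == m.-1 then 1 else 2.

Definition tbl (c cl i : nat) : nat * bool :=
  match c, cl, i with
  | 0, 0, 0 => (1, false) | 0, 0, 1 => (0, true) | 0, 0, _ => (2, true)
  | 0, 1, 0 => (1, false) | 0, 1, 1 => (2, true) | 0, 1, _ => (0, true)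
  | 0, _, 0 => (0, true)  | 0, _, 1 => (2, true) | 0, _, _ => (1, false)
  | 1, 0, 0 => (2, true)  | 1, 0, 1 => (2, false) | 1, 0, _ => (0, true)
  | 1, 1, 0 => (0, true)  | 1, 1, 1 => (1, true) | 1, 1, _ => (1, false)
  | 1, _, 0 => (1, false) | 1, _, 1 => (0, true) | 1, _, _ => (2, true)
  | 2, 0, 0 => (2, false) | 2, 0, 1 => (0, false) | 2, 0, _ => (1, true)
  | 2, 1, 0 => (2, false) | 2, 1, 1 => (0, false) | 2, 1, _ => (1, true)
  | 2, _, 0 => (1, true)  | 2, _, 1 => (2, false) | 2, _, _ => (0, false)
  | 3, 0, 0 => (0, true)  | 3, 0, 1 => (1, true) | 3, 0, _ => (0, false)
  | 3, 1, 0 => (1, true)  | 3, 1, 1 => (2, false) | 3, 1, _ => (2, true)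
  | 3, _, 0 => (2, false) | 3, _, 1 => (1, true) | 3, _, _ => (0, true)
  | _, 0, 0 => (1, true)  | _, 0, 1 => (2, true) | _, 0, _ => (1, false)
  | _, 1, 0 => (2, true)  | _, 1, 1 => (0, true) | _, 1, _ => (0, false)
  | _, _, 0 => (2, true)  | _, _, 1 => (0, false) | _, _, _ => (1, true)
  end.

Definition idx (m c i k : nat) : nat :=
  let M := m %/ 2 in let q := k %/ 2 in
  match c, i with
  | 0, 0 => if k == 0 then 0 else k.+1
  | 0, 1 => if k == 0 then 1 else if k == m.-1 then m.+1 else m + 2 * k + 2
  | 0, _ => if k == 0 then m + 2 else m + 2 * k + 1
  | 1, 0 => if k == 0 then 0 else m + 2 * k + 1
  | 1, 1 => if k == 0 then m.+1 else if k == m.-1 then m else m + 2 * k + 2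
  | 1, _ => if k == 0 then m + 2 else k
  | 2, 0 => if k == 0 then 0 else if k == m.-1 then 3 * m - 3 else 3 * k + 1
  | 2, 1 => if k == 0 then 3 * m - 1 else 3 * k - 1
  | 2, _ => if k == 0 then 1 else if k == m.-1 then 3 * m - 2 else 3 * k
  | 3, 0 => if k == 0 then 0 else 2 * k - 1
  | 3, 1 => 2 * m - 2 + k
  | 3, _ => if k == 0 then 3 * m - 1 else if k == m.-1 then 3 * m - 2 else 2 * k
  | _, 0 => if k == 0 then 0 else if k == m.-1 then 3 * M + 1
            else if k %% 2 == 1 then 3 * q + 2 else 3 * q + 3 * M + 3
  | _, 1 => if k == 0 then 3 * M + 3
            else if k %% 2 == 1 then 3 * q + 1 else 3 * q + 3 * M + 2
  | _, _ => if k == 0 then 3 * M + 2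
            else if k %% 2 == 1 then 3 * q + 3 * M + 4 else 3 * q
  end.

Lemma spec_step (m c i k : nat) : 2 < m -> m %% 2 = 1 -> c < 5 -> i < 3 -> k < m ->
  [/\ (tbl c (cls m k) i).1 < 3, idx m c i k < 3 * m &
   idx m c (tbl c (cls m k) i).1
     (if (tbl c (cls m k) i).2 then (if k == m.-1 then 0 else k.+1) else k)
   = if idx m c i k == (3 * m).-1 then 0 else (idx m c i k).+1].
Proof.
move=> m3 modd hc hi hk.
have hc' : c = 0 \/ c = 1 \/ c = 2 \/ c = 3 \/ c = 4 by lia.
have hi' : i = 0 \/ i = 1 \/ i = 2 by lia.
rewrite /cls.
case: (boolP (k == 0)) => [/eqP k0|kn0].
  subst k; have e : (0 == m.-1) = false by lia.
  rewrite ?eqxx e.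
  case: hc' => [->|[->|[->|[->|->]]]]; case: hi' => [->|[->|->]];
  rewrite /idx /= ?eqxx ?e; repeat case: ifP => ?; split; lia.
case: (boolP (k == m.-1)) => [k1|kn1].
  rewrite ?(negbTE kn0).
  case: hc' => [->|[->|[->|[->|->]]]]; case: hi' => [->|[->|->]];
  rewrite /idx /= ?k1 ?(negbTE kn0); repeat case: ifP => ?; split; lia.
rewrite ?(negbTE kn0) ?(negbTE kn1).
case: hc' => [->|[->|[->|[->|->]]]]; case: hi' => [->|[->|->]];
rewrite /idx /= ?(negbTE kn0) ?(negbTE kn1); repeat case: ifP => ?; split; lia.
Qed.

Definition vt (m t k : nat) : nat :=
  (if k < (2 * m) %% 3 then t else 2 * t) + (if k == 0 then 1 else 0).
Definition Vs (m t k : nat) : nat :=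
  if k == 0 then 0 else if k <= (2 * m) %% 3 then t * k + 1
  else t * ((2 * m) %% 3) + 2 * t * (k - (2 * m) %% 3) + 1.
Definition lidx (m t i k : nat) : nat := k + m * ((i + 2 * Vs m t k) %% 3).

Lemma lift_step (m t i k : nat) : 2 < m -> t < 3 -> i < 3 -> k < m ->
  lidx m t i k < 3 * m /\
  lidx m t ((i + vt m t k) %% 3) (if k == m.-1 then 0 else k.+1)
   = if lidx m t i k == (3 * m).-1 then 0 else (lidx m t i k).+1.
Proof.
move=> m3 ht hi hk; rewrite /lidx.
set e := (i + 2 * Vs m t k) %% 3.
set e' := (_ + 2 * Vs m t _) %% 3.
have he : e < 3 by rewrite ltn_mod.
have he' : e' < 3 by rewrite ltn_mod.
have rel : e' = if k == m.-1 then (e + 1) %% 3 else e.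
  { rewrite /e /e'; case: (boolP (k == m.-1)) => hk1; rewrite /Vs /vt /=.
    all: have ht' : t = 0 \/ t = 1 \/ t = 2 by lia.
    all: case: ht' => [e0|[e0|e0]]; subst t; repeat case: ifP => ?; lia. }
clearbody e e'.
have : e = 0 \/ e = 1 \/ e = 2 by lia.
have : e' = 0 \/ e' = 1 \/ e' = 2 by lia.
move: rel; case: (boolP (k == m.-1)) => hk1 rel.
all: move=> [E'|[E'|E']] [E|[E|E]]; rewrite E E' in rel *; rewrite ?muln0 ?muln1;
  repeat case: ifP => ?; lia.
Qed.


Definition goodp (V : finType) (m : nat) (p : (V -> V) * (V -> nat)) : Prop :=
  [/\ forall x, p.1 x != x, forall x, order p.1 x = m, forall x, p.2 x < m &
      forall x, p.2 (p.1 x) = if p.2 x == m.-1 then 0 else (p.2 x).+1].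

Lemma extract_all (V : finType) (m : nat) (Fs : seq {set V * V}) :
  (forall F, F \in Fs -> is_Cfactor m [set a : V * V | a.1 != a.2] F) ->
  exists fps : seq ((V -> V) * (V -> nat)),
    (forall p, List.In p fps -> goodp m p) /\
    forall a : V * V, count (fun F : {set V * V} => a \in F) Fs = count (fun p => p.1 a.1 == a.2) fps.
Proof.
elim: Fs => [|F Fs IH] HF; first by exists [::].
have [fps [g c]] : _ := IH (fun F' h => HF F' (mem_behead (s := F :: Fs) h)).
have [f [pos [h1 h2 h3 h4 h5]]] := extract (HF F (mem_head _ _)).
exists ((f, pos) :: fps); split.
  by move=> p /= [<- | /g //]; split.
by move=> [a1 a2] /=; rewrite c h1.
Qed.

Lemma tbl_stay (c cl i : nat) : c < 5 -> cl < 3 -> i < 3 ->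
  (tbl c cl i).1 < 3 /\ ((tbl c cl i).2 = false -> (tbl c cl i).1 != i).
Proof.
by case: c => [|[|[|[|[|]]]]] //; case: cl => [|[|[|]]] //; case: i => [|[|[|]]].
Qed.

Lemma tbl_count (cl i j : nat) : cl < 3 -> i < 3 -> j < 3 ->
  count (fun c => tbl c cl i == (j, false)) (iota 0 5) = (i != j) /\
  count (fun c => tbl c cl i == (j, true)) (iota 0 5) = 1.
Proof.
by case: cl => [|[|[|]]] //; case: i => [|[|[|]]] //; case: j => [|[|[|]]].
Qed.

Lemma cls_lt (m k : nat) : cls m k < 3.
Proof. by rewrite /cls; case: (k == 0); case: (k == m.-1). Qed.

Lemma vt_count (m k i j : nat) : i < 3 -> j < 3 ->
  count (fun t => (i + vt m t k) %% 3 == j) (iota 0 3) = 1.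
Proof.
rewrite /vt; case: (k < (2 * m) %% 3); case: (k == 0);
by case: i => [|[|[|]]] //; case: j => [|[|[|]]].
Qed.


Definition spec (V : finType) (m : nat) (f : V -> V) (pos : V -> nat) (c : nat)
  (s : 'I_3 * V) : 'I_3 * V :=
  ((inord (tbl c (cls m (pos s.2)) s.1).1 : 'I_3),
   if (tbl c (cls m (pos s.2)) s.1).2 then f s.2 else s.2).

Definition liftg (V : finType) (m : nat) (f : V -> V) (pos : V -> nat) (t : nat)
  (s : 'I_3 * V) : 'I_3 * V :=
  ((inord ((s.1 + vt m t (pos s.2)) %% 3) : 'I_3), f s.2).

Lemma inord_eq (a : nat) (j : 'I_3) : a < 3 -> ((inord a : 'I_3) == j) = (a == j).
Proof. by move=> ha; apply/eqP/eqP => [<-|->]; rewrite ?inordK ?inord_val. Qed.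

Lemma spec_ok (V : finType) (m : nat) (f : V -> V) (pos : V -> nat) (c : nat) :
  goodp m (f, pos) -> 2 < m -> m %% 2 = 1 -> c < 5 ->
  [/\ injective (spec m f pos c), forall s, order (spec m f pos c) s = 3 * m &
      forall s, spec m f pos c s != s].
Proof.
move=> [h1 h2 h3 h4] m3 modd hc; rewrite /= in h1 h2 h3 h4.
have cl3 := cls_lt m.
have [inj ord] : injective (spec m f pos c) /\ forall s, order (spec m f pos c) s = 3 * m.
  apply: (@ham V f m h2 _ (fun s => idx m c s.1 (pos s.2))).
  - move=> s; rewrite /spec /=; case: (tbl _ _ _).2; [right|left] => //.
  - move=> [i x] /=; by case: (@spec_step m c i (pos x) m3 modd hc (ltn_ord i) (h3 x)).
  - move=> [i x] /=; have [j3 _] := tbl_stay hc (cls_lt m (pos x)) (ltn_ord i).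
    rewrite /spec /= inordK //.
    case: (@spec_step m c i (pos x) m3 modd hc (ltn_ord i) (h3 x)) => _ _ <-.
    by case: (tbl _ _ _).2; rewrite ?h4.
split => // [[i x]]; rewrite /spec /=.
have [j3 st] := tbl_stay hc (cls_lt m (pos x)) (ltn_ord i).
move: st; case: (tbl _ _ _).2 => st.
  apply/negP => /eqP [_ e]; by move: (h1 x); rewrite e eqxx.
apply/negP => /eqP [e]; move: (st erefl); by rewrite -[X in _ != nat_of_ord X]e inordK // eqxx.
Qed.

Lemma liftg_ok (V : finType) (m : nat) (f : V -> V) (pos : V -> nat) (t : nat) :
  goodp m (f, pos) -> 2 < m -> t < 3 ->
  [/\ injective (liftg m f pos t), forall s, order (liftg m f pos t) s = 3 * m &
      forall s, liftg m f pos t s != s].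
Proof.
move=> [h1 h2 h3 h4] m3 ht; rewrite /= in h1 h2 h3 h4.
have [inj ord] : injective (liftg m f pos t) /\ forall s, order (liftg m f pos t) s = 3 * m.
  apply: (@ham V f m h2 _ (fun s => lidx m t s.1 (pos s.2))).
  - by move=> s; right.
  - move=> [i x] /=; by case: (lift_step m3 ht (ltn_ord i) (h3 x)).
  - move=> [i x] /=; rewrite /liftg /= inordK ?ltn_mod // h4.
    by case: (lift_step m3 ht (ltn_ord i) (h3 x)).
split => // [[i x]]; rewrite /liftg /=.
apply/negP => /eqP [_ e]; by move: (h1 x); rewrite e eqxx.
Qed.

Lemma spec_count (V : finType) (m : nat) (f : V -> V) (pos : V -> nat) (i j : 'I_3) (x y : V) :
  f x != x ->
  count (fun c => spec m f pos c (i, x) == (j, y)) (iota 0 5)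
  = if y == x then (i != j : nat) else (f x == y : nat).
Proof.
move=> fx.
have [hst hadv] := tbl_count (cls_lt m (pos x)) (ltn_ord i) (ltn_ord j).
have key : {in iota 0 5, (fun c => spec m f pos c (i, x) == (j, y)) =1
   (fun c => (tbl c (cls m (pos x)) i == (val j, false)) && (y == x)
   || (tbl c (cls m (pos x)) i == (val j, true)) && (f x == y))}.
  move=> c; rewrite mem_iota => /andP [_ hc].
  have [j3 _] := tbl_stay hc (cls_lt m (pos x)) (ltn_ord i).
  rewrite /spec /=; move: j3; case: (tbl _ _ _) => a b /= a3.
  rewrite -pair_eqE /= inord_eq //.
  by case: b; rewrite !xpair_eqE /=; case: (a == _); rewrite /= ?orbF // eq_sym.
rewrite (eq_in_count key).
case: (boolP (y == x)) => [/eqP yx | yx].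
  subst y; rewrite (negbTE fx).
  under eq_count do rewrite andbT andbF orbF.
  by rewrite hst.
under eq_count do rewrite andbF /=.
case: (boolP (f x == y)) => fy.
  under eq_count do rewrite andbT. by rewrite hadv.
under eq_count do rewrite andbF. by rewrite count_pred0.
Qed.

Lemma liftg_count (V : finType) (m : nat) (f : V -> V) (pos : V -> nat) (i j : 'I_3) (x y : V) :
  count (fun t => liftg m f pos t (i, x) == (j, y)) (iota 0 3) = (f x == y).
Proof.
have e : (fun t => liftg m f pos t (i, x) == (j, y)) =1
          (fun t => ((i + vt m t (pos x)) %% 3 == j) && (f x == y)).
  by move=> t; rewrite /liftg -pair_eqE /= inord_eq ?ltn_mod.
rewrite (eq_count e); case: (f x == y).
  have e2 : (fun t => ((i + vt m t (pos x)) %% 3 == j) && true) =1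
            (fun t => ((i + vt m t (pos x)) %% 3 == j)) by move=> t; rewrite andbT.
  by rewrite (eq_count e2) vt_count.
have e2 : (fun t => ((i + vt m t (pos x)) %% 3 == j) && false) =1 pred0 by move=> t; rewrite andbF.
by rewrite (eq_count e2) count_pred0.
Qed.


Lemma In_mem (T : eqType) (x : T) (s : seq T) : List.In x s -> x \in s.
Proof. elim: s => //= a s IH [-> | /IH h]; by rewrite inE ?eqxx ?h ?orbT. Qed.

Lemma In_map_ex (A B : Type) (f : A -> B) (s : seq A) y :
  List.In y (map f s) -> exists x, f x = y /\ List.In x s.
Proof. by move=> H; apply/List.in_map_iff. Qed.

Lemma In_cat (A : Type) (x : A) (s1 s2 : seq A) :
  List.In x (s1 ++ s2) -> List.In x s1 \/ List.In x s2.
Proof.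
elim: s1 => /= [|a s1 IH]; first by right.
by case=> [->|/IH [h|h]]; [left; left|left; right|right].
Qed.

Lemma In_flatten (A : Type) (x : A) (ss : seq (seq A)) :
  List.In x (flatten ss) -> exists2 s, List.In s ss & List.In x s.
Proof.
elim: ss => //= s ss IH H; case: (In_cat H) => [h | /IH [s' h1 h2]].
  by exists s; [left|].
by exists s'; [right|].
Qed.

Lemma count_mapE (T1 T2 : Type) (f : T1 -> T2) (P : T2 -> bool) (s : seq T1) :
  count P (map f s) = count (fun x => P (f x)) s.
Proof. by elim: s => //= a s ->. Qed.

Lemma main_construction (V : finType) (m : nat) (f0 : V -> V) (pos0 : V -> nat)
  (rest : seq ((V -> V) * (V -> nat))) :
  2 < m -> m %% 2 = 1 ->
  goodp m (f0, pos0) -> (forall p, List.In p rest -> goodp m p) ->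
  (forall u v : V, u != v -> (f0 u == v) + count (fun p => p.1 u == v) rest = 1) ->
  exists gs : seq ('I_3 * V -> 'I_3 * V),
    (forall g, List.In g gs -> [/\ injective g, forall x, order g x = 3 * m & forall x, g x != x]) /\
    (forall u v, u != v -> count (fun g => g u == v) gs = 1).
Proof.
move=> m3 modd g0 grest cov.
exists ([seq spec m f0 pos0 c | c <- iota 0 5] ++
        flatten [seq [seq liftg m p.1 p.2 t | t <- iota 0 3] | p <- rest]); split.
  move=> g H; case: (In_cat H) => H1.
    have [c [<- hc]] := In_map_ex H1.
    apply: spec_ok => //; by move: (In_mem hc); rewrite mem_iota.
  have [s hs hg] := In_flatten H1.
  have [[f pos] [hs' hp]] := In_map_ex hs; subst s.
  have [t [<- ht]] := In_map_ex hg.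
  apply: liftg_ok => //; first exact: grest.
  by move: (In_mem ht); rewrite mem_iota.
move=> [i x] [j y] uv.
rewrite count_cat count_flatten count_mapE -map_comp.
rewrite (_ : map _ rest = [seq nat_of_bool (p.1 x == y) | p <- rest]); last first.
  apply: eq_map => p; exact: (etrans (count_mapE _ _ _) (liftg_count m p.1 p.2 i j x y)).
rewrite (sumn_count (fun p : (V -> V) * (V -> nat) => p.1 x == y)).
have [fx _ _ _] := g0; rewrite /= in fx.
have e : (fun c => (spec m f0 pos0 c) (i, x) == (j, y)) =1 (fun c => spec m f0 pos0 c (i, x) == (j, y)) by [].
rewrite spec_count //.
case: (boolP (y == x)) => [/eqP yx | yx].
  subst y.
  have c0 : forall s : seq ((V -> V) * (V -> nat)), (forall p, List.In p s -> goodp m p) ->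
      count (fun p : (V -> V) * (V -> nat) => p.1 x == x) s = 0.
    elim => //= p s IH hs; rewrite IH => [|q hq]; last by apply: hs; right.
    have [h1 _ _ _] := hs p (or_introl erefl); by rewrite (negbTE (h1 x)).
  rewrite c0 // addn0.
  by case: (i =P j) uv => [->|] //; rewrite eqxx.
rewrite -(cov x y) //; by rewrite eq_sym.
Qed.



Lemma lt1_2m (m : nat) : 0 < m -> 1 < 2 * m.
Proof. lia. Qed.

Lemma m_ge3 (m : nat) : 0 < m -> odd m -> m != 1 -> 2 < m.
Proof. by case: m => [|[|[|]]]. Qed.

Lemma card_W (m : nat) : #|{: 'I_3 * 'I_(2 * m)}| = 6 * m.
Proof. rewrite card_prod !card_ord; lia. Qed.

Lemma modd2 (m : nat) : odd m -> m %% 2 = 1.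
Proof. by rewrite modn2 => ->. Qed.

End Aux.

Import Aux.

Theorem mainTheorem9 (m : nat) :
  0 < m -> odd m ->
  has_Cfactorization m (Kstar_arcs (2 * m)) ->
  has_Cfactorization (3 * m) (Kstar_arcs (6 * m)).
Proof.
move=> m0 modd [Fs [HF Hc]].
have [fps [good cnt]] := extract_all HF.
have cover : forall u v : 'I_(2 * m), u != v -> count (fun p => p.1 u == v) fps = 1.
  by move=> u v uv; rewrite -(cnt (u, v)) Hc // inE.
have lt1 := lt1_2m m0.
pose u0 : 'I_(2 * m) := Ordinal (ltn_trans (isT : 0 < 1) lt1).
pose u1 : 'I_(2 * m) := Ordinal lt1.
case: fps good cnt cover => [|[f0 pos0] rest] good cnt cover.
  by move: (cover u0 u1 isT).
have g0 : goodp m (f0, pos0) by apply: good; left.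
have m3 : 2 < m.
  apply: m_ge3 => //; apply/negP => /eqP m1.
  case: g0 => /= h1 h2 _ _.
  have c1 : #|fconnect f0 u0| = 1 by rewrite -[RHS]m1; exact: h2.
  have : 1 < #|fconnect f0 u0|.
    apply: (@leq_trans #|[set u0; f0 u0]|); first by rewrite cards2 eq_sym h1.
    apply: subset_leq_card; apply/subsetP => z; rewrite !inE => /orP [/eqP -> | /eqP ->];
      [exact: connect0 | exact: fconnect1].
  by rewrite c1.
have [gs [Hg Hcov]] := main_construction m3 (modd2 modd) g0 (fun p h => good p (or_intror h))
   (fun u v uv => cover u v uv).
pose E := card_W m.
pose h := fun s : 'I_3 * 'I_(2 * m) => cast_ord E (enum_rank s).
pose hinv := fun y : 'I_(6 * m) => enum_val (cast_ord (esym E) y).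
have hK : cancel h hinv by move=> s; rewrite /h /hinv cast_ordK enum_rankK.
have hinvK : cancel hinv h by move=> y; rewrite /h /hinv enum_valK cast_ordKV.
exact: (conj_factorization hK hinvK Hg Hcov).
Qed.
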